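(* Let $w=\mu^{\omega}(a)$ where $\mu$ is an injective $r$-uniform morphism ($r\ge 2$) on a finite alphabet $A$, prolongable on $a\in A$. Suppose $w$ is eventually periodic. Then the (minimal) period of $w$ is not divisible by $r$.
   Context: A morphism $\mu$ satisfies $\mu(uv)=\mu(u)\mu(v)$ for finite $u$; it is $r$-uniform if $|\mu(b)|=r$ for all letters $b$; prolongable on $a$ means $\mu(a)$ begins with $a$, and $\mu^{\omega}(a)$ is the infinite word having every $\mu^n(a)$ as a prefix. An infinite word $w$ is eventually periodic if there is an integer $n$ such that deleting the first $n$ letters of $w$ yields a periodic word; its period is the minimal period of that periodic suffix. *)

(* Defs.v *)
From mathcomp Require Import all_boot.
Set Implicit Arguments. Unset Strict Implicit. Unset Printing Implicit Defensive.

Definition morph_ext (A : Type) (mu : A -> seq A) (u : seq A) : seq A :=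
  flatten (map mu u).

Definition injective_morphism (A : eqType) (mu : A -> seq A) : Prop :=
  forall u v : seq A, morph_ext mu u = morph_ext mu v -> u = v.

Definition uniform (A : Type) (r : nat) (mu : A -> seq A) : Prop :=
  forall b : A, size (mu b) = r.

Definition prolongable (A : Type) (mu : A -> seq A) (a : A) : Prop :=
  exists s : seq A, mu a = a :: s.

(* w : nat -> A is the infinite word mu^omega(a): every mu^n(a) is a prefix. *)
Definition is_fixed_point_word (A : Type) (mu : A -> seq A) (a : A)
  (w : nat -> A) : Prop :=
  forall n i, i < size (iter n (morph_ext mu) [:: a]) ->
    w i = nth a (iter n (morph_ext mu) [:: a]) i.

Definition period_from (A : Type) (w : nat -> A) (n p : nat) : Prop :=
  0 < p /\ forall i, n <= i -> w (i + p) = w i.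

Definition eventually_periodic (A : Type) (w : nat -> A) : Prop :=
  exists n p, period_from w n p.

Definition eventual_min_period (A : Type) (w : nat -> A) (p : nat) : Prop :=
  (exists n, period_from w n p) /\
  forall n q, period_from w n q -> p <= q.

(* Main.v *)
Require Import Defs.
From mathcomp Require Import all_boot.
From mathcomp Require Import zify.

Lemma size_me (A : Type) (r : nat) (mu : A -> seq A) (u : seq A) :
  uniform r mu -> size (morph_ext mu u) = r * size u.
Proof.
move=> U; elim: u => [|x u IH]; first by rewrite /morph_ext /= muln0.
by rewrite /morph_ext /= size_cat U -/(morph_ext mu u) IH mulnS.
Qed.

Lemma nth_me (A : Type) (r : nat) (mu : A -> seq A) (u : seq A) (d : A) k j :
  uniform r mu -> k < size u -> j < r ->
  nth d (morph_ext mu u) (r * k + j) = nth d (mu (nth d u k)) j.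
Proof.
move=> U; elim: u k => [|x u IH] k //= Hk Hj.
rewrite /morph_ext /= nth_cat U -/(morph_ext mu u).
case: k Hk => [|k] Hk /=; first by rewrite muln0 add0n Hj.
have -> : (r * k.+1 + j < r) = false by lia.
have -> : r * k.+1 + j - r = r * k + j by lia.
by apply: IH.
Qed.

Lemma size_iter (A : Type) (r : nat) (mu : A -> seq A) (a : A) n :
  uniform r mu -> size (iter n (morph_ext mu) [:: a]) = r ^ n.
Proof.
move=> U; elim: n => [|n IH] //=.
by rewrite (@size_me _ r mu _ U) IH expnS.
Qed.

Theorem lemma10 (A : finType) (r : nat) (mu : A -> seq A) (a : A)
  (w : nat -> A) :
  2 <= r ->
  injective_morphism mu ->
  uniform r mu ->
  prolongable mu a ->
  is_fixed_point_word mu a w ->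
  eventually_periodic w ->
  forall p, eventual_min_period w p -> ~~ (r %| p).
Proof.
move=> Hr Inj U _ Fix _ p [[n [Hp Per]] Min].
have key : forall k j, j < r -> w (r * k + j) = nth a (mu (w k)) j.
  move=> k j Hj.
  have Hk : k < r ^ k by apply: ltn_expl.
  rewrite (Fix k.+1); last first.
    rewrite (@size_iter _ r mu a _ U) expnS; nia.
  rewrite /= (@nth_me _ r mu _ _ _ _ U) //; last by rewrite (@size_iter _ r mu a _ U).
  by rewrite -Fix // (@size_iter _ r mu a _ U).
apply/negP => /dvdnP [q Eq].
have Hq : 0 < q by rewrite lt0n; apply/eqP => q0; move: Hp; rewrite Eq q0.
have : p <= q.
  apply: (Min n q); split => // i Hi.
  have E : mu (w (i + q)) = mu (w i).
    have Hs1 : size (mu (w (i + q))) = size (mu (w i)) by rewrite !U.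
    apply: (eq_from_nth (x0 := a) Hs1) => j; rewrite U => Hj.
    rewrite -!key // mulnDr (mulnC r q) -Eq -addnA (addnC p) addnA Per //.
    nia.
  have : morph_ext mu [:: w (i + q)] = morph_ext mu [:: w i].
    by rewrite /morph_ext /= !cats0.
  by move/Inj => [].
rewrite Eq; nia.
Qed.
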